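(* Every Abel sequentially compact subset of $\mathbb{R}$ is bounded.
   Context: A sequence $(p_n)_{n\ge0}$ is Abel convergent to $\ell$ if $\sum_{k=0}^{\infty}p_k x^k$ converges for every $0\le x<1$ and $\lim_{x\to 1^-}(1-x)\sum_{k=0}^{\infty}p_k x^k=\ell$. A subset $F\subseteq\mathbb{R}$ is Abel sequentially compact if every sequence of points of $F$ has a subsequence Abel convergent to a limit belonging to $F$. *)

(* Defs.v *)
From Stdlib Require Import Reals.
From Coquelicot Require Import Coquelicot.
Open Scope R_scope.

Definition abel_convergent (p : nat -> R) (l : R) : Prop :=
  (forall x : R, 0 <= x < 1 -> ex_series (fun k => p k * x ^ k)) /\
  filterlim (fun x => (1 - x) * Series (fun k => p k * x ^ k))
            (at_left 1) (locally l).

Definition strictly_increasing (phi : nat -> nat) : Prop :=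
  forall n m : nat, (n < m)%nat -> (phi n < phi m)%nat.

Definition abel_seq_compact (F : R -> Prop) : Prop :=
  forall u : nat -> R, (forall n, F (u n)) ->
    exists phi : nat -> nat, strictly_increasing phi /\
      exists l : R, F l /\ abel_convergent (fun n => u (phi n)) l.

Definition bounded_set (F : R -> Prop) : Prop :=
  exists M : R, forall x : R, F x -> Rabs x <= M.

(* Main.v *)
Require Import Defs.
From Stdlib Require Import Reals Lra Lia Classical ClassicalEpsilon.
From Coquelicot Require Import Coquelicot.
Open Scope R_scope.

Lemma phi_ge (phi : nat -> nat) : strictly_increasing phi -> forall k, (k <= phi k)%nat.
Proof.
  intros H k; induction k as [|k IH]; [lia|].
  assert (phi k < phi (S k))%nat by (apply H; lia). lia.
Qed.

Theorem theorem16 (F : R -> Prop) : abel_seq_compact F -> bounded_set F.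
Proof.
  intros HF. apply NNPP; intro Hnb.
  assert (Hex : forall n : nat, exists x, F x /\ 2 ^ n < Rabs x).
  { intro n. apply NNPP; intro Hn. apply Hnb. exists (2 ^ n). intros x Fx.
    apply Rnot_lt_le. intro Hl. apply Hn. exists x; auto. }
  destruct (choice _ Hex) as [u Hu].
  destruct (HF u (fun n => proj1 (Hu n))) as [phi [Hphi [l [_ [Hser _]]]]].
  assert (Hs := Hser (/2) ltac:(lra)).
  apply ex_series_lim_0 in Hs.
  apply is_lim_seq_spec in Hs.
  destruct (Hs (mkposreal 1 Rlt_0_1)) as [N HN].
  specialize (HN N (le_n N)). simpl in HN.
  rewrite Rminus_0_r, Rabs_mult, <- RPow_abs in HN.
  rewrite (Rabs_right (/2)) in HN by lra.
  destruct (Hu (phi N)) as [_ Hb].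
  assert (2 ^ N <= 2 ^ phi N) by (apply Rle_pow; [lra | apply phi_ge; auto]).
  assert (Hp : 2 ^ N * (/2) ^ N = 1).
  { rewrite <- Rpow_mult_distr. replace (2 * /2) with 1 by field. apply pow1. }
  assert (0 < (/2) ^ N) by (apply pow_lt; lra).
  assert (2 ^ N * (/2)^N <= Rabs (u (phi N)) * (/2) ^ N)
    by (apply Rmult_le_compat_r; lra).
  lra.
Qed.
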